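(* Let $(X,\mathscr{A},\mu)$ be a $\sigma$-finite measure space and $\phi$ a nonsingular transformation of $X$. If the composition operator $C_\phi$ is symmetric, then $C_\phi$ is selfadjoint and unitary, and $C_\phi^2=I$. If $C_\phi$ is positive and symmetric, then $C_\phi=I$.
   Context: Nonsingular: $\phi^{-1}(\Delta)\in\mathscr{A}$ for $\Delta\in\mathscr{A}$ and $\mu(\phi^{-1}(\Delta))=0$ whenever $\mu(\Delta)=0$. $C_\phi$ is the operator in $L^2(\mu)$ with $\mathcal{D}(C_\phi)=\{f\in L^2(\mu):f\circ\phi\in L^2(\mu)\}$, $C_\phi f=f\circ\phi$. A densely defined operator $A$ is symmetric if $A\subseteq A^*$; positive means $\langle Af,f\rangle\ge0$ for $f\in\mathcal{D}(A)$. *)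

(* Defs.v *)
From HB Require Import structures.
From mathcomp Require Import all_boot all_order all_algebra.
From mathcomp Require Import complex.
From mathcomp Require Import all_classical all_reals all_analysis.

Set Implicit Arguments.
Unset Strict Implicit.
Unset Printing Implicit Defensive.

Import Order.TTheory GRing.Theory Num.Theory.
Local Open Scope classical_set_scope.
Local Open Scope ring_scope.

Section L2space.
Context {d : measure_display} {T : measurableType d} {R : realType}
  (mu : {measure set T -> \bar R}).

Definition sqnorm (z : R[i]) : R := (complex.Re z) ^+ 2 + (complex.Im z) ^+ 2.

(* f is (a representative of) an element of the complex Hilbert space L^2(mu) *)
Definition L2 (f : T -> R[i]) : Prop :=
  [/\ measurable_fun setT (fun x => complex.Re (f x)),
      measurable_fun setT (fun x => complex.Im (f x)) &
      (\int[mu]_x (sqnorm (f x))%:E < +oo)%E].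

(* equality in L^2(mu): equality mu-almost everywhere *)
Definition ae_eq (f g : T -> R[i]) : Prop := {ae mu, forall x, f x = g x}.

Definition ip (f g : T -> R[i]) : R[i] :=
  Complex (Rintegral mu setT (fun x => complex.Re (f x * conjc (g x))))
          (Rintegral mu setT (fun x => complex.Im (f x * conjc (g x)))).

Definition sqnormL2 (f : T -> R[i]) : \bar R := (\int[mu]_x (sqnorm (f x))%:E)%E.

(* a (possibly unbounded) linear operator in L^2(mu), given on representatives:
   its domain and its action *)
Record operator := Operator {
  dom : (T -> R[i]) -> Prop ;
  app : (T -> R[i]) -> (T -> R[i]) }.

Definition densely_defined (A : operator) : Prop :=
  (forall f, dom A f -> L2 f) /\
  forall g, L2 g -> forall e : R, 0 < e ->
    exists f, dom A f /\ (sqnormL2 (fun x => (f x - g x)%R) < (e ^+ 2)%:E)%E.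

(* adj A g h  <->  g \in D(A^* ) and A^* g = h, i.e.
   <A f, g> = <f, h> for all f \in D(A) *)
Definition adj (A : operator) (g h : T -> R[i]) : Prop :=
  [/\ L2 g, L2 h & forall f, dom A f -> ip (app A f) g = ip f h].

Definition symmetric_op (A : operator) : Prop :=
  densely_defined A /\ forall f, dom A f -> adj A f (app A f).

Definition selfadjoint_op (A : operator) : Prop :=
  [/\ densely_defined A,
      (forall f, dom A f -> adj A f (app A f)) &
      (forall g h, adj A g h -> dom A g /\ ae_eq (app A g) h)].

(* <A f, f> >= 0 for f \in D(A) (order of the complex numbers) *)
Definition positive_op (A : operator) : Prop :=
  forall f, dom A f -> 0 <= ip (app A f) f.

(* A is a bounded everywhere defined operator with A^* A = A A^* = I *)
Definition unitary_op (A : operator) : Prop :=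
  [/\ (forall f, dom A f <-> L2 f),
      (exists c : R, forall f, L2 f -> (sqnormL2 (app A f) <= c%:E * sqnormL2 f)%E),
      (forall g, L2 g -> exists h, adj A g h),
      (forall f, L2 f -> adj A (app A f) f) &
      (forall g h, adj A g h -> ae_eq (app A h) g)].

(* A^2 = I (D(A^2) = {f \in D(A) : A f \in D(A)}) *)
Definition square_is_identity (A : operator) : Prop :=
  (forall f, (dom A f /\ dom A (app A f)) <-> L2 f) /\
  (forall f, L2 f -> ae_eq (app A (app A f)) f).

Definition is_identity (A : operator) : Prop :=
  (forall f, dom A f <-> L2 f) /\ (forall f, L2 f -> ae_eq (app A f) f).

Definition nonsingular (phi : T -> T) : Prop :=
  measurable_fun setT phi /\
  forall A, measurable A -> mu A = 0%E -> mu (phi @^-1` A) = 0%E.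

Definition C_op (phi : T -> T) : operator :=
  Operator (fun f => L2 f /\ L2 (f \o phi)) (fun f => f \o phi).

End L2space.

(* Main.v *)
Require Import Defs.
From HB Require Import structures.
From mathcomp Require Import all_boot all_order all_algebra.
From mathcomp Require Import complex.
From mathcomp Require Import all_classical all_reals all_analysis.
From mathcomp Require Import measurable_realfun.
From mathcomp Require Import ring lra.
Import Order.TTheory GRing.Theory Num.Theory.
Local Open Scope classical_set_scope.
Local Open Scope ring_scope.

Section A.
Context {d : measure_display} {T : measurableType d} {R : realType}
  (mu : {measure set T -> \bar R}).

Lemma sqnorm_ge0 (z : R[i]) : 0 <= sqnorm z.
Proof. by rewrite /sqnorm addr_ge0 // sqr_ge0. Qed.

Lemma sqnorm_eq0 (z : R[i]) : sqnorm z = 0 -> z = 0.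
Proof.
case: z => a b; rewrite /sqnorm /= => /eqP.
rewrite paddr_eq0 ?sqr_ge0 // !sqrf_eq0 => /andP[/eqP -> /eqP ->] //.
Qed.

Lemma ReM (a b : R[i]) : complex.Re (a * conjc b) = complex.Re a * complex.Re b + complex.Im a * complex.Im b.
Proof. case: a => a1 a2; case: b => b1 b2 /=. ring. Qed.
Lemma ImM (a b : R[i]) : complex.Im (a * conjc b) = complex.Im a * complex.Re b - complex.Re a * complex.Im b.
Proof. case: a => a1 a2; case: b => b1 b2 /=. ring. Qed.

Lemma mRe (f : T -> R[i]) : L2 mu f -> measurable_fun setT (fun x => complex.Re (f x)).
Proof. by case. Qed.
Lemma mIm (f : T -> R[i]) : L2 mu f -> measurable_fun setT (fun x => complex.Im (f x)).
Proof. by case. Qed.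

Lemma msq (f : T -> R[i]) : L2 mu f -> measurable_fun setT (fun x => sqnorm (f x)).
Proof.
move=> Hf; apply: measurable_funD; apply: measurable_funX; [exact: mRe|exact: mIm].
Qed.

Lemma mReM (f g : T -> R[i]) : L2 mu f -> L2 mu g ->
  measurable_fun setT (fun x => complex.Re (f x * conjc (g x))).
Proof.
move=> Hf Hg; rewrite (_ : (fun x => _) = (fun x => complex.Re (f x) * complex.Re (g x) + complex.Im (f x) * complex.Im (g x))); last by apply/funext => x; rewrite ReM.
apply: measurable_funD; apply: measurable_funM; by [exact: mRe|exact: mIm].
Qed.

Lemma mImM (f g : T -> R[i]) : L2 mu f -> L2 mu g ->
  measurable_fun setT (fun x => complex.Im (f x * conjc (g x))).
Proof.
move=> Hf Hg; rewrite (_ : (fun x => _) = (fun x => complex.Im (f x) * complex.Re (g x) - complex.Re (f x) * complex.Im (g x))); last by apply/funext => x; rewrite ImM.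
apply: measurable_funB; apply: measurable_funM; by [exact: mRe|exact: mIm].
Qed.

Lemma int_sq (f : T -> R[i]) : L2 mu f -> mu.-integrable setT (EFin \o (fun x => sqnorm (f x))).
Proof.
move=> Hf; apply/integrableP; split; first exact/measurable_EFinP/msq.
case: (Hf) => _ _ H; apply: le_lt_trans H; rewrite le_eqVlt; apply/orP; left; apply/eqP.
by apply: eq_integral => x _ /=; rewrite ger0_norm // sqnorm_ge0.
Qed.

Lemma int_bound (h k : T -> R) : measurable_fun setT h ->
  (forall x, `|h x| <= k x) -> mu.-integrable setT (EFin \o k) ->
  mu.-integrable setT (EFin \o h).
Proof.
move=> mh hk ik; apply: le_integrable ik => //.
  exact/measurable_EFinP.
move=> x _ /=; rewrite lee_fin; apply: (le_trans (hk x)).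
by rewrite ler_norm.
Qed.

Lemma abs_mul_le (a b : R) : `|a * b| <= a ^+ 2 + b ^+ 2.
Proof.
rewrite normrM.
have := sqr_ge0 (`|a| - `|b|); rewrite sqrrB !real_normK ?num_real //.
have := normr_ge0 a; have := normr_ge0 b; nra.
Qed.

Lemma int_ReM (f g : T -> R[i]) : L2 mu f -> L2 mu g ->
  mu.-integrable setT (EFin \o (fun x => complex.Re (f x * conjc (g x)))).
Proof.
move=> Hf Hg; apply: (@int_bound _ (fun x => sqnorm (f x) + sqnorm (g x))).
- exact: mReM.
- move=> x; rewrite ReM /sqnorm; apply: (le_trans (ler_normD _ _)).
  have := abs_mul_le (complex.Re (f x)) (complex.Re (g x)).
  have := abs_mul_le (complex.Im (f x)) (complex.Im (g x)). lra.
- rewrite (_ : (EFin \o _) = (EFin \o (fun x => sqnorm (f x))) \+ (EFin \o (fun x => sqnorm (g x))))%E //.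
  by apply: integrableD => //; exact: int_sq.
Qed.

Lemma int_ImM (f g : T -> R[i]) : L2 mu f -> L2 mu g ->
  mu.-integrable setT (EFin \o (fun x => complex.Im (f x * conjc (g x)))).
Proof.
move=> Hf Hg; apply: (@int_bound _ (fun x => sqnorm (f x) + sqnorm (g x))).
- exact: mImM.
- move=> x; rewrite ImM /sqnorm; apply: (le_trans (ler_normB _ _)).
  have := abs_mul_le (complex.Im (f x)) (complex.Re (g x)).
  have := abs_mul_le (complex.Re (f x)) (complex.Im (g x)). lra.
- rewrite (_ : (EFin \o _) = (EFin \o (fun x => sqnorm (f x))) \+ (EFin \o (fun x => sqnorm (g x))))%E //.
  by apply: integrableD => //; exact: int_sq.
Qed.


Lemma L2_of (f : T -> R[i]) : measurable_fun setT (fun x => complex.Re (f x)) ->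
  measurable_fun setT (fun x => complex.Im (f x)) ->
  mu.-integrable setT (EFin \o (fun x => sqnorm (f x))) -> L2 mu f.
Proof.
move=> m1 m2 /integrableP[_ H]; split => //; apply: le_lt_trans H.
by rewrite le_eqVlt; apply/orP; left; apply/eqP; apply: eq_integral => x _ /=;
  rewrite ger0_norm // sqnorm_ge0.
Qed.

Lemma ReB (a b : R[i]) : complex.Re (a - b) = complex.Re a - complex.Re b.
Proof. by case: a; case: b. Qed.
Lemma ImB (a b : R[i]) : complex.Im (a - b) = complex.Im a - complex.Im b.
Proof. by case: a; case: b. Qed.

Lemma L2_sub (f g : T -> R[i]) : L2 mu f -> L2 mu g -> L2 mu (fun x => f x - g x).
Proof.
move=> Hf Hg; apply: L2_of.
- under eq_fun do rewrite ReB. by apply: measurable_funB; exact: mRe.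
- under eq_fun do rewrite ImB. by apply: measurable_funB; exact: mIm.
apply: (@int_bound _ (fun x => (sqnorm (f x) + sqnorm (g x)) + (sqnorm (f x) + sqnorm (g x)))).
- rewrite /sqnorm; under eq_fun do rewrite ReB ImB.
  apply: measurable_funD; apply: measurable_funX; apply: measurable_funB;
  by [exact: mRe|exact: mIm].
- move=> x; rewrite ger0_norm ?sqnorm_ge0 // /sqnorm ReB ImB.
  have := sqr_ge0 (complex.Re (f x) + complex.Re (g x)).
  have := sqr_ge0 (complex.Im (f x) + complex.Im (g x)). nra.
- rewrite (_ : (EFin \o _) = ((EFin \o (fun x => sqnorm (f x))) \+ (EFin \o (fun x => sqnorm (g x)))) \+ ((EFin \o (fun x => sqnorm (f x))) \+ (EFin \o (fun x => sqnorm (g x)))))%E //.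
  by apply: integrableD => //; apply: integrableD => //; exact: int_sq.
Qed.

Lemma cplx_eq (a b : R[i]) : complex.Re a = complex.Re b -> complex.Im a = complex.Im b -> a = b.
Proof. by case: a => ? ?; case: b => ? ? /= -> ->. Qed.

Lemma ip_subl (a b c : T -> R[i]) : L2 mu a -> L2 mu b -> L2 mu c ->
  ip mu (fun x => a x - b x) c = ip mu a c - ip mu b c.
Proof.
move=> Ha Hb Hc; apply: cplx_eq; rewrite ?ReB ?ImB /ip /=.
- rewrite -RintegralB //; try exact: int_ReM.
  by apply: eq_Rintegral => x _; rewrite mulrBl ReB.
- rewrite -RintegralB //; try exact: int_ImM.
  by apply: eq_Rintegral => x _; rewrite mulrBl ImB.
Qed.

Lemma ip_subr (a b c : T -> R[i]) : L2 mu a -> L2 mu b -> L2 mu c ->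
  ip mu c (fun x => a x - b x) = ip mu c a - ip mu c b.
Proof.
move=> Ha Hb Hc; apply: cplx_eq; rewrite ?ReB ?ImB /ip /=.
- rewrite -RintegralB //; try exact: int_ReM.
  by apply: eq_Rintegral => x _; rewrite rmorphB mulrBr ReB.
- rewrite -RintegralB //; try exact: int_ImM.
  by apply: eq_Rintegral => x _; rewrite rmorphB mulrBr ImB.
Qed.

Lemma ip_self (a : T -> R[i]) : ip mu a a = Complex (fine (sqnormL2 mu a)) 0.
Proof.
apply: cplx_eq => /=.
- rewrite /Rintegral /sqnormL2; congr fine; apply: eq_integral => x _.
  by rewrite ReM /sqnorm !expr2.
- rewrite /Rintegral (_ : (fun x => _) = cst 0%E) ?integral0 //.
  by apply/funext => x; rewrite ImM /= mulrC subrr.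
Qed.

Lemma RN (h : T -> R) : mu.-integrable setT (EFin \o h) ->
  Rintegral mu setT (fun x => - h x) = - Rintegral mu setT h.
Proof.
move=> ih.
have -> : (fun x => - h x) = (fun x => (fun=> 0) x - h x) by apply/funext => x; rewrite sub0r.
rewrite RintegralB //; last by rewrite (_ : _ \o _ = cst 0%E) //; exact: integrable0.
by rewrite Rintegral_cst // mul0r sub0r.
Qed.

Lemma ip_conj (a b : T -> R[i]) : L2 mu a -> L2 mu b -> ip mu b a = conjc (ip mu a b).
Proof.
move=> Ha Hb; apply: cplx_eq => /=.
- by apply: eq_Rintegral => x _; rewrite !ReM mulrC [X in _ + X]mulrC.
- rewrite -RN; last exact: int_ImM.
  by apply: eq_Rintegral => x _; rewrite !ImM; ring.
Qed.


Lemma aeeq_refl (f : T -> R[i]) : Defs.ae_eq mu f f.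
Proof. exact: aeW. Qed.

Lemma aeeq_sym (f g : T -> R[i]) : Defs.ae_eq mu f g -> Defs.ae_eq mu g f.
Proof. by apply: filterS => x ->. Qed.

Lemma aeeq_trans (f g h : T -> R[i]) : Defs.ae_eq mu f g -> Defs.ae_eq mu g h ->
  Defs.ae_eq mu f h.
Proof. by apply: filterS2 => x -> ->. Qed.

Lemma Rint_ae (h k : T -> R) : measurable_fun setT h -> measurable_fun setT k ->
  {ae mu, forall x, h x = k x} -> Rintegral mu setT h = Rintegral mu setT k.
Proof.
move=> mh mk H; rewrite /Rintegral; congr fine.
apply: ae_eq_integral => //; try exact/measurable_EFinP.
by apply: filterS H => x /= ->.
Qed.

Lemma ip_ael (a a' c : T -> R[i]) : L2 mu a -> L2 mu a' -> L2 mu c ->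
  Defs.ae_eq mu a a' -> ip mu a c = ip mu a' c.
Proof.
move=> Ha Ha' Hc H; apply: cplx_eq => /=; apply: Rint_ae;
  try (exact: mReM); try (exact: mImM); by apply: filterS H => x /= ->.
Qed.

Lemma ip_aer (a a' c : T -> R[i]) : L2 mu a -> L2 mu a' -> L2 mu c ->
  Defs.ae_eq mu a a' -> ip mu c a = ip mu c a'.
Proof.
move=> Ha Ha' Hc H; apply: cplx_eq => /=; apply: Rint_ae;
  try (exact: mReM); try (exact: mImM); by apply: filterS H => x /= ->.
Qed.

Lemma ip_zero (u : T -> R[i]) : L2 mu u -> ip mu u u = 0 -> Defs.ae_eq mu u (fun=> 0).
Proof.
move=> Hu; rewrite ip_self => /(congr1 (@complex.Re R)) /= H0.
have fin : sqnormL2 mu u \is a fin_num.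
  by case: Hu => _ _ H; rewrite ge0_fin_numE // integral_ge0 // => x _; rewrite lee_fin sqnorm_ge0.
have H1 : sqnormL2 mu u = 0%E by rewrite -(fineK fin) H0.
have : (\int[mu]_(x in setT) `|(EFin \o (fun x => sqnorm (u x))) x| = 0)%E.
  rewrite -H1; apply: eq_integral => x _ /=; by rewrite ger0_norm // sqnorm_ge0.
have mE : measurable_fun setT (EFin \o (fun x => sqnorm (u x))) by apply/measurable_EFinP; exact: msq.
move/ae_eq_integral_abs => /(_ measurableT mE) H.
by apply: filterS H => x /(_ I) [] /sqnorm_eq0.
Qed.

Lemma aeeq_sub0 (f g : T -> R[i]) : Defs.ae_eq mu (fun x => f x - g x) (fun=> 0) ->
  Defs.ae_eq mu f g.
Proof. by apply: filterS => x /eqP; rewrite subr_eq0 => /eqP. Qed.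

End A.
Arguments mRe {d T R mu f}.
Arguments mIm {d T R mu f}.
Arguments msq {d T R mu f}.
Arguments mReM {d T R mu f g}.
Arguments mImM {d T R mu f g}.
Arguments int_sq {d T R mu f}.
Arguments int_ReM {d T R mu f g}.
Arguments int_ImM {d T R mu f g}.
Arguments L2_sub {d T R mu f g}.
Arguments ip_subl {d T R mu a b c}.
Arguments ip_subr {d T R mu a b c}.
Arguments ip_conj {d T R mu a b}.
Arguments ip_ael {d T R mu a a' c}.
Arguments ip_aer {d T R mu a a' c}.
Arguments ip_zero {d T R mu u}.
Arguments aeeq_sub0 {d T R mu f g}.
Arguments aeeq_sym {d T R mu f g}.
Arguments aeeq_trans {d T R mu f g h}.

Section B.
Context {d : measure_display} {T : measurableType d} {R : realType}
  (mu : {measure set T -> \bar R}) (phi : T -> T).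
Hypothesis mphi : measurable_fun setT phi.
Hypothesis ns : forall A, measurable A -> mu A = 0%E -> mu (phi @^-1` A) = 0%E.
Hypothesis pres : forall A, measurable A -> mu (phi @^-1` A) = mu A.

Lemma int_comp (g : T -> R) : measurable_fun setT g -> (forall x, 0 <= g x) ->
  (\int[mu]_x (g (phi x))%:E = \int[mu]_x (g x)%:E)%E.
Proof.
move=> mg g0.
have := ge0_integral_pushforward mphi mu (D := setT) (f := EFin \o g) measurableT.
rewrite preimage_setT => <-; first last.
- by move=> y _; rewrite lee_fin.
- exact/measurable_EFinP.
apply: eq_measure_integral => A mA _ /=.
by rewrite /pushforward pres.
Qed.

Lemma L2_comp {f : T -> R[i]} : L2 mu f -> L2 mu (f \o phi).
Proof.
move=> Hf; split.
- exact: (measurableT_comp (mRe Hf) mphi).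
- exact: (measurableT_comp (mIm Hf) mphi).
- case: (Hf) => _ _ H; rewrite /= (@int_comp (fun x => sqnorm (f x))) //.
  + exact: (msq Hf).
  + move=> x; exact: sqnorm_ge0.
Qed.

Lemma sqL2_comp {f : T -> R[i]} : L2 mu f -> sqnormL2 mu (f \o phi) = sqnormL2 mu f.
Proof.
move=> Hf; rewrite /sqnormL2 /= (@int_comp (fun x => sqnorm (f x))) //.
+ exact: (msq Hf).
+ move=> x; exact: sqnorm_ge0.
Qed.

Lemma ae_comp {f g : T -> R[i]} : Defs.ae_eq mu f g -> Defs.ae_eq mu (f \o phi) (g \o phi).
Proof.
case=> A [mA A0 sA]; exists (phi @^-1` A); split.
- by rewrite -(setTI (phi @^-1` A)); exact: mphi.
- exact: ns.
- by move=> x /= nx; apply: sA.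
Qed.

Hypothesis sym : forall f g, L2 mu f -> L2 mu g -> ip mu (g \o phi) f = ip mu g (f \o phi).

Lemma CC {f : T -> R[i]} : L2 mu f -> Defs.ae_eq mu (f \o phi \o phi) f.
Proof.
move=> Hf.
have H1 := L2_comp Hf; have H2 := L2_comp H1.
apply: aeeq_sub0; apply: ip_zero; first exact: L2_sub.
rewrite ip_subl //; try exact: L2_sub.
rewrite !ip_subr //.
have e1 : ip mu (f \o phi \o phi) (f \o phi \o phi) = ip mu f f.
  by rewrite !ip_self !sqL2_comp.
have e2 : ip mu (f \o phi \o phi) f = ip mu f f.
  by rewrite (sym _ _ Hf H1) !ip_self sqL2_comp.
have e3 : ip mu f (f \o phi \o phi) = ip mu f f.
  rewrite (ip_conj H2 Hf) e2 ip_self; apply: cplx_eq => /=; by rewrite ?oppr0.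
by rewrite e1 e2 e3 !subrr.
Qed.


Lemma adj_C (g h : T -> R[i]) : adj mu (C_op mu phi) g h -> Defs.ae_eq mu (g \o phi) h.
Proof.
case=> Lg Lh Hadj.
have Lgp := L2_comp Lg.
have Lu : L2 mu (fun x => (g \o phi) x - h x) by exact: L2_sub.
apply: aeeq_sub0; apply: ip_zero => //.
rewrite ip_subr //.
have := Hadj _ (conj Lu (L2_comp Lu)) => /= <-.
by rewrite (sym _ _ Lg Lu) subrr.
Qed.

Hypothesis dd : densely_defined mu (C_op mu phi).

Lemma adj_self (f : T -> R[i]) : L2 mu f -> adj mu (C_op mu phi) f (f \o phi).
Proof.
move=> Lf; split => //; first exact: L2_comp.
by move=> g [Lg _] /=; exact: sym.
Qed.

Lemma part1 : [/\ selfadjoint_op mu (C_op mu phi), unitary_op mu (C_op mu phi) &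
         square_is_identity mu (C_op mu phi)].
Proof.
split.
- split => //.
  + by move=> f [Lf _]; exact: adj_self.
  + move=> g h H; split; last exact: adj_C.
    by case: H => Lg _ _; split => //; exact: L2_comp.
- split.
  + by move=> f /=; split; [case|move=> Lf; split => //; exact: L2_comp].
  + by exists 1 => f Lf /=; rewrite mul1e sqL2_comp.
  + by move=> g Lg; exists (g \o phi); exact: adj_self.
  + move=> f Lf; split => //; first exact: L2_comp.
    move=> g [Lg _] /=; rewrite (sym _ _ (L2_comp Lf) Lg).
    by apply: ip_aer => //; [exact: L2_comp (L2_comp Lf) | exact: CC].
  + move=> g h H; have e := adj_C _ _ H.
    case: H => Lg Lh _.
    apply: aeeq_trans (CC Lg).
    exact: aeeq_sym (ae_comp e).
- split.
  + move=> f /=; split; first by case=> [[]].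
    by move=> Lf; split; split => //; [exact: L2_comp| exact: L2_comp| exact: L2_comp (L2_comp Lf)].
  + move=> f Lf; exact: CC.
Qed.

Lemma part2 : positive_op mu (C_op mu phi) -> is_identity mu (C_op mu phi).
Proof.
move=> pos; split.
  by move=> f /=; split; [case|move=> Lf; split => //; exact: L2_comp].
move=> f Lf.
have L1 := L2_comp Lf; have L2' := L2_comp L1.
have Lu : L2 mu (fun x => (f \o phi) x - f x) by exact: L2_sub.
have := pos _ (conj Lu (L2_comp Lu)) => /=.
have -> : ip mu ((fun x => (f \o phi) x - f x) \o phi) (fun x => (f \o phi) x - f x) =
     - ip mu (fun x => (f \o phi) x - f x) (fun x => (f \o phi) x - f x).
  rewrite (@ip_subl _ _ _ _ (f \o phi \o phi) (f \o phi)) //.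
  rewrite (ip_ael L2' Lf Lu (CC Lf)) ip_subl //.
  by rewrite opprB.
rewrite ip_self lecE /= oppr0 eqxx /= oppr_ge0 => hle.
apply: aeeq_sub0; apply: ip_zero => //.
rewrite ip_self; apply: cplx_eq => //=.
apply/eqP; rewrite eq_le hle /= fine_ge0 // /sqnormL2 integral_ge0 // => x _.
by rewrite lee_fin sqnorm_ge0.
Qed.

End B.

Section M.
Context {d : measure_display} {T : measurableType d} {R : realType}
  (mu : {measure set T -> \bar R}) (phi : T -> T).
Hypothesis mphi : measurable_fun setT phi.
Hypothesis ns : forall A, measurable A -> mu A = 0%E -> mu (phi @^-1` A) = 0%E.
Hypothesis sym : forall f g, L2 mu f -> L2 mu (f \o phi) -> L2 mu g -> L2 mu (g \o phi) ->
  ip mu (g \o phi) f = ip mu g (f \o phi).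

Lemma mpre {A} : measurable A -> measurable (phi @^-1` A).
Proof. by move=> mA; rewrite -(setTI (phi @^-1` A)); exact: mphi. Qed.

Definition good (A : set T) := [/\ measurable A, (mu A < +oo)%E & (mu (phi @^-1` A) < +oo)%E].

Definition ind (A : set T) : T -> R[i] := fun x => Complex (\1_A x) 0.

Lemma indic_sq (A : set T) x : (\1_A x : R) ^+ 2 = \1_A x.
Proof. by rewrite indicE; case: (x \in A); rewrite /= ?expr0n ?expr1n. Qed.

Lemma L2_ind {A} : measurable A -> (mu A < +oo)%E -> L2 mu (ind A).
Proof.
move=> mA fA; split => /=.
- exact: measurable_indic.
- exact: measurable_cst.
- rewrite (_ : (fun x => _) = (fun x => (\1_A x)%:E)); last first.
    by apply/funext => x; rewrite /sqnorm /= indic_sq expr0n addr0.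
  by rewrite integral_indic // setIT.
Qed.

Lemma ind_comp A : ind A \o phi = ind (phi @^-1` A).
Proof. by apply/funext => x; rewrite /ind /= !indicE. Qed.

Lemma ip_ind A B : measurable A -> measurable B ->
  complex.Re (ip mu (ind A) (ind B)) = fine (mu (A `&` B)).
Proof.
move=> mA mB /=; rewrite /Rintegral; congr fine.
rewrite -[in RHS](setIT (A `&` B)) -integral_indic; last exact: measurableI.
  by apply: eq_integral => x _; rewrite /ind /= indicI /=; congr EFin; ring.
exact: measurableT.
Qed.

Lemma M1 {A B} : good A -> good B -> mu (phi @^-1` B `&` A) = mu (B `&` phi @^-1` A).
Proof.
case=> mA fA fpA; case=> mB fB fpB.
have LA := L2_ind mA fA; have LB := L2_ind mB fB.
have LpA : L2 mu (ind A \o phi) by rewrite ind_comp; exact: L2_ind (mpre mA) fpA.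
have LpB : L2 mu (ind B \o phi) by rewrite ind_comp; exact: L2_ind (mpre mB) fpB.
have := sym _ _ LA LpA LB LpB; rewrite !ind_comp => /(congr1 (@complex.Re R)).
rewrite !ip_ind //; try exact: mpre.
have mI1 : measurable (phi @^-1` B `&` A) by apply: measurableI => //; exact: mpre.
have mI2 : measurable (B `&` phi @^-1` A) by apply: measurableI => //; exact: mpre.
have f1 : mu (phi @^-1` B `&` A) \is a fin_num.
  rewrite ge0_fin_numE //; apply: le_lt_trans fA; apply: le_measure; rewrite ?inE //.
have f2 : mu (B `&` phi @^-1` A) \is a fin_num.
  rewrite ge0_fin_numE //; apply: le_lt_trans fB; apply: le_measure; rewrite ?inE //.
by move=> e; rewrite -(fineK f1) -(fineK f2) e.
Qed.

Lemma lim_cap (H : nat -> set T) : (forall n, measurable (H n)) -> nondecreasing_seq H ->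
  \bigcup_n H n = setT -> forall E, measurable E ->
  (fun n => mu (E `&` H n)) @ \oo --> mu E.
Proof.
move=> mH ndH cH E mE.
have -> : mu E = mu (\bigcup_n (E `&` H n)) by rewrite -setI_bigcupr cH setIT.
apply: (nondecreasing_cvg_mu (F := fun n => E `&` H n)).
- by move=> n; exact: measurableI.
- by apply: bigcupT_measurable => n; exact: measurableI.
- move=> m n mn; apply/subsetPset => x [Ex Hx]; split => //; exact: (subsetPset _ _ (ndH _ _ mn) x Hx).
Qed.

Lemma lim_eq (u v : nat -> \bar R) (a b : \bar R) : u @ \oo --> a -> v @ \oo --> b ->
  u = v -> a = b.
Proof. by move=> ha hb e; rewrite -(cvg_lim _ ha) // -(cvg_lim _ hb) // e. Qed.


Lemma arch (r : R) : 0 < r -> exists j : nat, (j.+1%:R)^-1 < r.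
Proof.
move=> r0; have [N _ HN] := near_infty_natSinv_lt (PosNum r0).
by exists N; apply: HN => /=.
Qed.

Definition big (h : T -> R[i]) (a : R) :=
  setT `&` [set x | (a%:E <= `|(EFin \o (fun x => sqnorm (h x))) x|)%E].

Lemma bigP h a x : big h a x <-> a <= sqnorm (h x).
Proof.
rewrite /big /=; split.
- by case=> _ /=; rewrite ger0_norm ?sqnorm_ge0 // lee_fin.
- by move=> H; split => //=; rewrite ger0_norm ?sqnorm_ge0 // lee_fin.
Qed.

Lemma big_m {h a} : L2 mu h -> measurable (big h a).
Proof.
move=> Lh; apply: emeasurable_fun_c_infty => //.
apply: measurableT_comp => //; exact/measurable_EFinP/(msq Lh).
Qed.

Lemma markov {h a} : L2 mu h -> 0 < a -> (a%:E * mu (big h a) <= sqnormL2 mu h)%E.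
Proof.
move=> Lh a0.
have mE : measurable_fun setT (EFin \o (fun x => sqnorm (h x))) by apply/measurable_EFinP; exact: msq Lh.
have := le_integral_abse mu measurableT mE a0.
rewrite -/(big h a) => H; apply: (le_trans H); rewrite le_eqVlt; apply/orP; left; apply/eqP.
by apply: eq_integral => x _ /=; rewrite ger0_norm ?sqnorm_ge0.
Qed.

Lemma big_fin {h a} : L2 mu h -> 0 < a -> (mu (big h a) < +oo)%E.
Proof.
move=> Lh a0; rewrite ltey; apply/negP => /eqP e.
have := markov Lh a0; rewrite e gt0_muley ?lte_fin // leye_eq => /eqP H.
by case: Lh => _ _; rewrite -/(sqnormL2 mu h) H.
Qed.

Lemma big_pre h a : phi @^-1` big h a = big (h \o phi) a.
Proof. by rewrite /big preimage_setI preimage_setT. Qed.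

Lemma goodU {A B} : good A -> good B -> good (A `|` B).
Proof.
case=> mA fA pA; case=> mB fB pB; split; first exact: measurableU.
- apply: le_lt_trans (measureU2 mu mA mB) _; exact: lte_add_pinfty.
- rewrite preimage_setU; apply: le_lt_trans (measureU2 mu (mpre mA) (mpre mB)) _.
  exact: lte_add_pinfty.
Qed.

Lemma good0 : good set0.
Proof. by split; rewrite ?preimage_set0 ?measure0. Qed.

Lemma good_bigcup n (Q : nat -> set T) : (forall i, (i < n)%N -> good (Q i)) ->
  good (\bigcup_(i in [set k | (k < n)%N]) Q i).
Proof.
elim: n => [|n IH] H.
  rewrite (_ : \bigcup_(i in [set k | (k < 0)%N]) Q i = set0); first exact: good0.
  by rewrite -subset0 => x [].
have -> : \bigcup_(i in [set k | (k < n.+1)%N]) Q i =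
    \bigcup_(i in [set k | (k < n)%N]) Q i `|` Q n.
  apply/seteqP; split => x.
  - case=> i /= lin Qx; rewrite ltnS leq_eqVlt in lin; case/orP: lin => [/eqP <-|lin].
    + by right.
    + by left; exists i.
  - case=> [[i /= lin Qx]|Qx]; first by exists i => //=; exact: ltnW.
    by exists n => /=.
apply: goodU; first by apply: IH => i lin; apply: H; exact: ltnW.
exact: H.
Qed.

Hypothesis dense : forall g, L2 mu g -> forall e : R, 0 < e ->
    exists f, (L2 mu f /\ L2 mu (f \o phi)) /\ (sqnormL2 mu (fun x => (f x - g x)%R) < (e ^+ 2)%:E)%E.
Hypothesis sf : sigma_finite setT mu.

Lemma cover_ex : exists G : nat -> set T,
  [/\ forall n, good (G n), nondecreasing_seq G & \bigcup_n G n = setT].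
Proof.
case: sf => F FT mF.
have LF i : L2 mu (ind (F i)) by case: (mF i) => ? ?; exact: L2_ind.
have eps (j : nat) : 0 < (j.+1%:R : R)^-1 by rewrite invr_gt0 ltr0n.
have [fs Hfs] := choice (fun (p : nat * nat) => dense _ (LF p.1) _ (eps p.2)).
pose S i j := big (fs (i, j)) 4^-1.
have gS i j : good (S i j).
  have [[L1 L2'] _] := Hfs (i, j).
  have a0 : (0 : R) < 4^-1 by rewrite invr_gt0.
  split; first exact: big_m.
  - exact: big_fin.
  - by rewrite /S big_pre; exact: big_fin.
pose N i := F i `\` \bigcup_j S i j.
have mN i : measurable (N i).
  apply: measurableD; first by case: (mF i).
  by apply: bigcupT_measurable => j; case: (gS i j).
have N0 i : mu (N i) = 0%E.
  have [mFi fFi] := mF i.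
  have fin : mu (N i) \is a fin_num.
    rewrite ge0_fin_numE //; apply: le_lt_trans fFi; apply: le_measure; rewrite ?inE //.
    by move=> x [].
  have bnd j : (4^-1 * fine (mu (N i)) < (j.+1%:R : R)^-1 ^+ 2).
    have [[L1 L2'] Hd] := Hfs (i, j).
    have Lu : L2 mu (fun x => fs (i, j) x - ind (F i) x) by exact: L2_sub.
    have a0 : (0 : R) < 4^-1 by rewrite invr_gt0.
    rewrite -lte_fin; apply: le_lt_trans Hd.
    apply: le_trans (markov Lu a0).
    rewrite EFinM fineK // lee_pmul2l ?lte_fin //.
    apply: le_measure; rewrite ?inE //; first exact: big_m.
    move=> x [Fx nS]; apply/bigP.
    have nSx : ~ (4^-1 <= sqnorm (fs (i, j) x)).
      by move=> h; apply: nS; exists j => //; apply/bigP.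
    move/negP: nSx; rewrite -ltNge => lt.
    move: lt; rewrite /sqnorm /ind /= indicE mem_set //= ReB ImB /=.
    set a := complex.Re _; set b := complex.Im _ => lt.
    have := sqr_ge0 b; nra.
  have r0 : fine (mu (N i)) <= 0.
    rewrite leNgt; apply/negP => r0.
    have [j Hj] := @arch _ (divr_gt0 r0 (ltr0n R 4)) .
    have := bnd j.
    have e0 := eps j.
    have e1 : (j.+1%:R : R)^-1 <= 1 by rewrite invf_le1 // ler1n.
    move: Hj; set e := (j.+1%:R : R)^-1 => Hj.
    have ee : e * e <= e by rewrite ler_piMl // ltW.
    rewrite expr2 mulrC; move: Hj; set q := fine (mu (N i)) / 4; lra.
  rewrite -(fineK fin); congr EFin; apply/eqP; rewrite eq_le r0 /=.
  by rewrite fine_ge0.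
have gN i : good (N i).
  split => //; first by rewrite N0.
  by rewrite ns // N0.
pose P i j := N i `|` S i j.
have gP i j : good (P i j) by apply: goodU.
pose G n := \bigcup_(i in [set k | (k < n)%N]) \bigcup_(j in [set k | (k < n)%N]) P i j.
have memG n x : G n x <-> exists i j, [/\ (i < n)%N, (j < n)%N & P i j x].
  split.
  - by case=> i /= lin [j /= jln Px]; exists i, j.
  - by case=> i [j [lin jln Px]]; exists i => //=; exists j.
exists G; split.
- move=> n; apply: good_bigcup => i _; apply: good_bigcup => j _; exact: gP.
- move=> m n mn; apply/subsetPset => x /memG [i [j [im jm Px]]].
  apply/memG; exists i, j; split => //; exact: leq_trans mn.
- apply/seteqP; split => // x _.
  have : setT x by [].
  rewrite FT => -[i _ Fx].
  have [[j _ Sx]|nS] := pselect ((\bigcup_j S i j) x).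
  + exists (maxn i j).+1 => //; apply/memG; exists i, j; split; try by rewrite ltnS ?leq_maxl ?leq_maxr.
    by right.
  + exists i.+1 => //; apply/memG; exists i, 0%N; split => //.
    by left.
Qed.


Lemma M3 A : measurable A -> mu (phi @^-1` A) = mu A.
Proof.
move=> mA; case: cover_ex => G [gG ndG cG].
have mG n : measurable (G n) by case: (gG n).
have mpG n : measurable (phi @^-1` G n) by apply: mpre.
have ndpG : nondecreasing_seq (fun n => phi @^-1` G n).
  move=> m n mn; apply/subsetPset => x /=; exact: (subsetPset _ _ (ndG _ _ mn)).
have cpG : \bigcup_n (phi @^-1` G n) = setT by rewrite -preimage_bigcup cG.
have step1 B : good B -> mu (phi @^-1` B) = mu B.
  move=> gB; have mB : measurable B by case: gB.
  apply: (@lim_eq (fun n => mu (phi @^-1` B `&` G n)) (fun n => mu (B `&` phi @^-1` G n))).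
  - exact: lim_cap (mpre mB).
  - exact: lim_cap.
  apply/funext => n; rewrite setIC -(M1 gB (gG n)) setIC //.
have gI n : good (A `&` G n).
  case: (gG n) => _ f1 f2.
  have mAG : measurable (A `&` G n) by exact: measurableI.
  split => //.
  - apply: le_lt_trans f1; apply: le_measure; rewrite ?inE //; exact: subIsetr.
  - apply: le_lt_trans f2; apply: le_measure; rewrite ?inE //; try exact: mpre.
    by apply: preimage_subset; exact: subIsetr.
apply: (@lim_eq (fun n => mu (phi @^-1` A `&` phi @^-1` G n)) (fun n => mu (A `&` G n))).
- exact: lim_cap (mpre mA).
- exact: lim_cap.
apply/funext => n; rewrite -preimage_setI; exact: step1.
Qed.

End M.

Lemma all_of {d : measure_display} {T : measurableType d}
  {R : realType} (mu : {measure set T -> \bar R}) (phi : T -> T) :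
  sigma_finite setT mu -> nonsingular mu phi -> symmetric_op mu (C_op mu phi) ->
  [/\ measurable_fun setT phi,
      (forall A, measurable A -> mu A = 0%E -> mu (phi @^-1` A) = 0%E),
      (forall A, measurable A -> mu (phi @^-1` A) = mu A) &
      (forall f g, L2 mu f -> L2 mu g -> ip mu (g \o phi) f = ip mu g (f \o phi))].
Proof.
move=> sf [mphi ns] [dd symH].
have symM : forall f g, L2 mu f -> L2 mu (f \o phi) -> L2 mu g -> L2 mu (g \o phi) ->
    ip mu (g \o phi) f = ip mu g (f \o phi).
  move=> f g Lf Lpf Lg Lpg; have [_ _ H] := symH f (conj Lf Lpf); exact: H.
have dense := dd.2.
have pres := M3 mu phi mphi ns symM dense sf.
split => // f g Lf Lg; apply: symM => //; exact: (L2_comp mu phi mphi pres).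
Qed.

Theorem propositionB1 (d : measure_display) (T : measurableType d)
  (R : realType) (mu : {measure set T -> \bar R}) (phi : T -> T) :
  sigma_finite setT mu -> nonsingular mu phi ->
  (symmetric_op mu (C_op mu phi) ->
     [/\ selfadjoint_op mu (C_op mu phi), unitary_op mu (C_op mu phi) &
         square_is_identity mu (C_op mu phi)]) /\
  (positive_op mu (C_op mu phi) -> symmetric_op mu (C_op mu phi) ->
     is_identity mu (C_op mu phi)).
Proof.
move=> sf ns; split.
- move=> S; have [mphi ns' pres sym] := all_of mu phi sf ns S.
  exact: (part1 mu phi mphi ns' pres sym S.1).
- move=> pos S; have [mphi ns' pres sym] := all_of mu phi sf ns S.
  exact: (part2 mu phi mphi pres sym pos).
Qed.
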